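(* Let $f$ be an orientation-preserving $C^1$ diffeomorphism of the circle $\mathrm{S}^1=\mathbb{R}/\mathbb{Z}$ with irrational rotation number $\rho$. Then there is a sequence $(h_n)$ of orientation-preserving $C^1$ circle diffeomorphisms such that $h_n f h_n^{-1}$ converges to the rotation $R_\rho: x\mapsto x+\rho$ in the $C^1$ topology. *)

(* Defs.v *)
From Stdlib Require Import Reals Lra ZArith.
Open Scope R_scope.

(* An orientation-preserving C^1 diffeomorphism of S^1 = R/Z, represented by a
   lift F : R -> R: F is C^1 with everywhere positive derivative and
   F (x + 1) = F x + 1.  (Positive derivative + periodicity of F - id give a
   bijection of R whose inverse is automatically C^1.) *)
Definition circle_diffeo (F : R -> R) : Prop :=
  exists F' : R -> R,
    (forall x, derivable_pt_lim F x (F' x)) /\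
    continuity F' /\
    (forall x, 0 < F' x) /\
    (forall x, F (x + 1) = F x + 1).

Definition rotation_number (F : R -> R) (rho : R) : Prop :=
  forall x, Un_cv (fun n => (Nat.iter n F x - x) / INR n) rho.

Definition irrational (r : R) : Prop :=
  forall p q : Z, q <> 0%Z -> r <> IZR p / IZR q.

(* Main.v *)
Require Import Defs.
From Stdlib Require Import Reals ZArith.
From Stdlib Require Import Lra Lia List Classical ClassicalEpsilon.
From Coquelicot Require Coquelicot.
Open Scope R_scope.

Fixpoint bsum (f g : R -> R) (n : nat) (x : R) : R :=
  match n with
  | O => 0
  | S n' => bsum f g n' x + g (Nat.iter n' f x)
  end.

Lemma iter_add_r (f : R -> R) m k x :
  Nat.iter (m + k) f x = Nat.iter k f (Nat.iter m f x).
Proof. rewrite Nat.add_comm, Nat.iter_add. reflexivity. Qed.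

Lemma bsum_add f g m k x :
  bsum f g (m + k) x = bsum f g m x + bsum f g k (Nat.iter m f x).
Proof.
  induction k as [|k IH].
  - rewrite Nat.add_0_r; simpl; ring.
  - rewrite Nat.add_succ_r; simpl. rewrite IH, iter_add_r. ring.
Qed.

Lemma bsum_succ_l f g n x : bsum f g (S n) x = g x + bsum f g n (f x).
Proof.
  change (S n) with (1 + n)%nat. rewrite bsum_add. simpl. ring.
Qed.

Lemma shift_nat (p : R -> R) c :
  (forall x, p (x + 1) = p x + c) -> forall (n : nat) x, p (x + INR n) = p x + INR n * c.
Proof.
  intros H n; induction n as [|n IH]; intros x.
  - simpl. rewrite Rplus_0_r. ring.
  - rewrite S_INR. replace (x + (INR n + 1)) with ((x + INR n) + 1) by ring.
    rewrite H, IH. ring.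
Qed.

Lemma shift_Z (p : R -> R) c :
  (forall x, p (x + 1) = p x + c) -> forall (k : Z) x, p (x + IZR k) = p x + IZR k * c.
Proof.
  intros H k x. destruct k as [|q|q].
  - simpl. rewrite Rplus_0_r. ring.
  - rewrite <- positive_nat_Z, <- INR_IZR_INZ. apply shift_nat; auto.
  - rewrite <- Pos2Z.opp_pos, opp_IZR, <- positive_nat_Z, <- INR_IZR_INZ.
    set (n := Pos.to_nat q).
    pose proof (shift_nat p c H n (x + - INR n)) as E.
    replace (x + - INR n + INR n) with x in E by ring. lra.
Qed.

Lemma iter_shift (f : R -> R) :
  (forall x, f (x + 1) = f x + 1) -> forall n (k : Z) x,
  Nat.iter n f (x + IZR k) = Nat.iter n f x + IZR k.
Proof.
  intros H n; induction n as [|n IH]; intros k x; simpl; auto.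
  rewrite IH. pose proof (shift_Z f 1 H k (Nat.iter n f x)). lra.
Qed.

Lemma iter_per1 (f : R -> R) :
  (forall x, f (x + 1) = f x + 1) -> forall n x, Nat.iter n f (x + 1) = Nat.iter n f x + 1.
Proof. intros H n x. apply (iter_shift f H n 1%Z x). Qed.

Lemma bsum_shift f g :
  (forall x, f (x + 1) = f x + 1) -> (forall x, g (x + 1) = g x) ->
  forall n (k : Z) x, bsum f g n (x + IZR k) = bsum f g n x.
Proof.
  intros Hf Hg n; induction n as [|n IH]; intros k x; simpl; auto.
  rewrite IH, iter_shift by auto. pose proof (shift_Z g 0 (fun y => ltac:(rewrite Hg; ring)) k (Nat.iter n f x)).
  rewrite H. ring.
Qed.

Lemma int_part_red x : exists k : Z, 0 <= x - IZR k < 1.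
Proof. exists (Int_part x). pose proof (base_Int_part x). lra. Qed.

Lemma iter_mono (f : R -> R) : (forall x y, x < y -> f x < f y) ->
  forall n x y, x < y -> Nat.iter n f x < Nat.iter n f y.
Proof. intros H n; induction n; intros; simpl; auto. Qed.

Lemma iter_mono_le (f : R -> R) : (forall x y, x < y -> f x < f y) ->
  forall n x y, x <= y -> Nat.iter n f x <= Nat.iter n f y.
Proof. intros H n x y [Hl| Heq]. left; apply iter_mono; auto. subst; lra. Qed.

Lemma iter_cont (f : R -> R) : continuity f -> forall n, continuity (fun x => Nat.iter n f x).
Proof.
  intros H n; induction n as [|n IH]; simpl.
  - apply derivable_continuous, derivable_id.
  - intros x. apply (continuity_pt_comp (fun x => Nat.iter n f x) f); auto.
Qed.

Lemma bsum_cont f g : continuity f -> continuity g -> forall n, continuity (bsum f g n).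
Proof.
  intros Hf Hg n; induction n as [|n IH]; simpl.
  - apply continuity_const. intros x y; auto.
  - apply continuity_plus; auto. intros x.
    apply (continuity_pt_comp (fun x => Nat.iter n f x) g); auto. apply iter_cont; auto.
Qed.

Lemma per_bound (p : R -> R) : continuity p -> (forall x, p (x + 1) = p x) ->
  exists C, 1 <= C /\ forall x, Rabs (p x) <= C.
Proof.
  intros Hc Hp.
  destruct (continuity_ab_maj p 0 1) as [M [HM _]]; [lra| intros; apply Hc|].
  destruct (continuity_ab_min p 0 1) as [m [Hm _]]; [lra| intros; apply Hc|].
  exists (Rmax 1 (Rmax (Rabs (p M)) (Rabs (p m)))). split. apply Rmax_l.
  intros x. destruct (int_part_red x) as [k Hk].
  assert (E: p x = p (x - IZR k)).
  { pose proof (shift_Z p 0 (fun y => ltac:(rewrite Hp; ring)) k (x - IZR k)) as E.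
    replace (x - IZR k + IZR k) with x in E by ring. lra. }
  rewrite E. assert (Hk' : 0 <= x - IZR k <= 1) by lra. specialize (HM _ Hk'). specialize (Hm _ Hk').
  apply Rabs_le. pose proof (Rmax_r 1 (Rmax (Rabs (p M)) (Rabs (p m)))).
  pose proof (Rmax_l (Rabs (p M)) (Rabs (p m))). pose proof (Rmax_r (Rabs (p M)) (Rabs (p m))).
  pose proof (Rle_abs (p M)). pose proof (Rabs_pos (p m)). pose proof (Rabs_Ropp (p m)).
  pose proof (Rle_abs (- p m)). split; lra.
Qed.

Lemma per_unif (p : R -> R) c : continuity p -> (forall x, p (x + 1) = p x + c) ->
  forall eps, 0 < eps -> exists d, 0 < d /\ forall x y, Rabs (x - y) < d -> Rabs (p x - p y) < eps.
Proof.
  intros Hc Hp eps He.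
  pose proof (Heine p (fun t => -1 <= t <= 2) (compact_P3 (-1) 2) (fun x _ => Hc x)) as HU.
  destruct (HU (mkposreal eps He)) as [[d Hd] Hdd]. simpl in Hdd.
  exists (Rmin d 1). split. apply Rmin_pos; lra.
  intros x y Hxy. destruct (int_part_red x) as [k Hk].
  pose proof (shift_Z p c Hp k (x - IZR k)) as E1.
  pose proof (shift_Z p c Hp k (y - IZR k)) as E2.
  replace (x - IZR k + IZR k) with x in E1 by ring.
  replace (y - IZR k + IZR k) with y in E2 by ring.
  rewrite E1, E2. replace (p (x - IZR k) + IZR k * c - (p (y - IZR k) + IZR k * c))
    with (p (x - IZR k) - p (y - IZR k)) by ring.
  pose proof (Rmin_l d 1). pose proof (Rmin_r d 1).
  apply Rabs_def2 in Hxy.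
  apply Hdd; try lra. apply Rabs_def1; lra.
Qed.

Lemma cont_eps (p : R -> R) x : continuity_pt p x ->
  forall eps, 0 < eps -> exists d, 0 < d /\ forall y, Rabs (y - x) < d -> Rabs (p y - p x) < eps.
Proof.
  intros H eps He. destruct (H eps He) as [d [Hd Hdd]]. exists d. split; auto.
  intros y Hy. destruct (Req_dec y x) as [->|ne]. rewrite Rminus_diag, Rabs_R0; auto.
  apply Hdd. split. split; auto. exact I. auto.
Qed.

Lemma exp_le_mono x y : x <= y -> exp x <= exp y.
Proof. intros [H|H]. left; apply exp_increasing; auto. subst; lra. Qed.

Lemma Rabs_def2b (x y : R) : Rabs x <= y -> - y <= x <= y.
Proof. intros H. pose proof (Rle_abs x). pose proof (Rle_abs (- x)). rewrite Rabs_Ropp in *. lra. Qed.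

Lemma nat_above (r : R) : exists N : nat, r <= INR N.
Proof.
  exists (Z.to_nat (up (Rmax r 0))). destruct (archimed (Rmax r 0)) as [H _].
  assert (0 <= up (Rmax r 0))%Z.
  { apply le_IZR. pose proof (Rmax_r r 0). simpl. lra. }
  rewrite INR_IZR_INZ, Z2Nat.id by auto. pose proof (Rmax_l r 0). lra.
Qed.

Lemma irr_int th : irrational th -> forall (i j : nat) (t : Z),
  INR i * th = INR j * th + IZR t -> i = j.
Proof.
  intros Hirr i j t E. destruct (Nat.eq_dec i j) as [e|ne]; auto. exfalso.
  apply (Hirr t (Z.of_nat i - Z.of_nat j)%Z). lia.
  rewrite minus_IZR, <- !INR_IZR_INZ.
  assert (INR i <> INR j) by (intro Q; apply INR_eq in Q; auto).
  field_simplify_eq. lra. lra.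
Qed.

Lemma nodup_map_inj (c : nat -> nat) (l : list nat) :
  NoDup l -> (forall i j, In i l -> In j l -> c i = c j -> i = j) -> NoDup (map c l).
Proof.
  induction l as [|a l IH]; intros Hn Hi; simpl. constructor.
  inversion Hn; subst. constructor.
  - intro Hin. apply in_map_iff in Hin. destruct Hin as [z [Hz Hzl]].
    assert (z = a) by (apply Hi; simpl; auto). subst; auto.
  - apply IH; auto. intros; apply Hi; simpl; auto.
Qed.

Lemma count_le (b : nat -> bool) (c : nat -> nat) G N :
  (forall i, b i = true -> (c i < G)%nat) ->
  (forall i j, b i = true -> b j = true -> c i = c j -> i = j) ->
  (length (filter b (seq 0 N)) <= G)%nat.
Proof.
  intros H1 H2. rewrite <- (length_map c). rewrite <- (length_seq G 0).
  apply NoDup_incl_length.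
  - apply nodup_map_inj. apply NoDup_filter, seq_NoDup.
    intros i j Hi Hj. apply filter_In in Hi, Hj. apply H2; tauto.
  - intros z Hz. apply in_map_iff in Hz. destruct Hz as [i [<- Hi]].
    apply filter_In in Hi. apply in_seq. specialize (H1 i (proj2 Hi)). lia.
Qed.

Lemma count_S (b : nat -> bool) N :
  length (filter b (seq 0 (S N))) = (length (filter b (seq 0 N)) + if b N then 1 else 0)%nat.
Proof.
  rewrite seq_S, filter_app, length_app. simpl. destruct (b N); simpl; lia.
Qed.

Lemma argmax_nat (s : nat -> R) n : exists m, (m <= n)%nat /\ forall k, (k <= n)%nat -> s k <= s m.
Proof.
  induction n as [|n IH].
  - exists O. split; auto. intros k Hk. assert (k = O) by lia. subst; lra.
  - destruct IH as [m [Hm Hk]]. destruct (Rle_dec (s (S n)) (s m)).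
    + exists m. split. lia. intros k Hk'. destruct (Nat.eq_dec k (S n)). subst; auto. apply Hk; lia.
    + exists (S n). split. lia. intros k Hk'. destruct (Nat.eq_dec k (S n)). subst; lra.
      pose proof (Hk k ltac:(lia)). lra.
Qed.

Section Core.
Variables f finv g h0 : R -> R.
Variable th : R.
Hypothesis f_cont : continuity f.
Hypothesis g_cont : continuity g.
Hypothesis f_inc : forall x y, x < y -> f x < f y.
Hypothesis f_finv : forall y, f (finv y) = y.
Hypothesis f_per : forall x, f (x + 1) = f x + 1.
Hypothesis g_per : forall x, g (x + 1) = g x.
Hypothesis f_mvt : forall u v, u < v -> exists c, u <= c <= v /\ f v - f u <= (v - u) * exp (g c).
Hypothesis h0_cont : continuity h0.
Hypothesis h0_mono : forall x y, x <= y -> h0 x <= h0 y.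
Hypothesis h0_per : forall x, h0 (x + 1) = h0 x + 1.
Hypothesis h0_eq : forall x, h0 (f x) = h0 x + th.
Hypothesis th_irr : irrational th.

Notation BS := (bsum f g).

Lemma h0_iter n x : h0 (Nat.iter n f x) = h0 x + INR n * th.
Proof.
  induction n as [|n IH]. simpl; ring. rewrite Nat.iter_succ, h0_eq, IH, S_INR. ring.
Qed.

Lemma h0_shift (k : Z) x : h0 (x + IZR k) = h0 x + IZR k.
Proof. rewrite (shift_Z h0 1 h0_per). ring. Qed.

Definition LS a := forall s, 0 < s -> h0 (a - s) < h0 a.

Lemma LS_f a : LS a -> LS (f a).
Proof.
  intros H s Hs. set (a' := finv (f a - s)).
  assert (Ha : f a' = f a - s) by apply f_finv.
  assert (a' < a).
  { destruct (Rlt_or_le a' a) as [|Hle]; auto. destruct Hle as [Hl|He].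
    apply f_inc in Hl; lra. rewrite He in Ha; lra. }
  rewrite <- Ha, !h0_eq. specialize (H (a - a') ltac:(lra)).
  replace (a - (a - a')) with a' in H by ring. lra.
Qed.

Lemma LS_iter n a : LS a -> LS (Nat.iter n f a).
Proof. induction n; simpl; auto. intros; apply LS_f; auto. Qed.

Lemma LS_shift a k : LS a -> LS (a + IZR k).
Proof.
  intros H s Hs. replace (a + IZR k - s) with ((a - s) + IZR k) by ring.
  rewrite !h0_shift. specialize (H s Hs). lra.
Qed.

Lemma level_reduce x : exists a, a <= x /\ h0 a = h0 x /\ LS a.
Proof.
  set (E := fun w => h0 (- w) = h0 x).
  assert (Hb : bound E).
  { exists (1 - x). intros w Hw. unfold E in Hw.
    destruct (Rle_or_lt w (1 - x)) as [|Hl]; auto. exfalso.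
    assert (h0 (- w) <= h0 (x - 1)) by (apply h0_mono; lra).
    replace (x - 1) with (x + IZR (-1)) in H by (simpl; ring).
    rewrite h0_shift in H. simpl in H. lra. }
  assert (Hne : exists w, E w) by (exists (- x); unfold E; rewrite Ropp_involutive; auto).
  destruct (completeness E Hb Hne) as [m [Hub Hlub]].
  assert (Hmx : - x <= m) by (apply Hub; unfold E; rewrite Ropp_involutive; auto).
  assert (Hval : h0 (- m) = h0 x).
  { apply Rle_antisym. apply h0_mono; lra.
    apply Rnot_lt_le; intro Hlt.
    destruct (cont_eps h0 (- m) (h0_cont (- m)) (h0 x - h0 (- m)) ltac:(lra)) as [d [Hd Hdd]].
    assert (Hex : exists w, E w /\ m - d < w).
    { apply NNPP; intro Hn. assert (m <= m - d); [|lra].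
      apply Hlub. intros w Hw. apply Rnot_lt_le; intro; apply Hn; exists w; auto. }
    destruct Hex as [w [Hw Hwd]]. assert (w <= m) by (apply Hub; auto).
    destruct (Req_dec w m) as [e|ne]. subst. unfold E in Hw. lra.
    assert (Hh : Rabs (h0 (- w) - h0 (- m)) < h0 x - h0 (- m)).
    { apply Hdd. rewrite Rabs_right; lra. }
    unfold E in Hw. rewrite Hw in Hh. rewrite Rabs_right in Hh; lra. }
  exists (- m). split; [lra|split; auto].
  intros s Hs. destruct (h0_mono (- m - s) (- m) ltac:(lra)) as [|Heq]; auto. exfalso.
  assert (m + s <= m); [|lra]. apply Hub. unfold E.
  replace (- (m + s)) with (- m - s) by ring. rewrite Heq; auto.
Qed.

Lemma bsum_bound C : (forall x, Rabs (g x) <= C) -> forall n x, Rabs (BS n x) <= INR n * C.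
Proof.
  intros HC n; induction n as [|n IH]; intros x.
  simpl. rewrite Rabs_R0. lra.
  cbn [bsum]. rewrite S_INR. eapply Rle_trans. apply Rabs_triang. specialize (IH x). specialize (HC (Nat.iter n f x)).
  lra.
Qed.

Lemma distortion C d w (G : nat) x a :
  (forall x, Rabs (g x) <= C) ->
  0 < d -> (forall u v, Rabs (u - v) <= d -> Rabs (g u - g v) <= w) ->
  (0 < G)%nat -> 1 < INR G * d ->
  a <= x -> h0 a = h0 x ->
  forall N, Rabs (BS N x - BS N a) <= INR N * w + 2 * C * INR G.
Proof.
  intros HC Hd Hw HG HGd Hax Hh N.
  set (u i := Nat.iter i f a). set (v i := Nat.iter i f x).
  set (b i := if Rlt_dec d (v i - u i) then true else false).
  assert (Huv : forall i, u i <= v i) by (intros; apply iter_mono_le; auto).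
  assert (Hlev : forall i z, u i <= z <= v i -> h0 z = h0 x + INR i * th).
  { intros i z [H1 H2]. apply h0_mono in H1. apply h0_mono in H2.
    unfold u, v in *. rewrite !h0_iter in *. rewrite Hh in H1. lra. }
  set (k i := (Int_part (INR G * u i) + 1)%Z).
  set (P i := IZR (k i) / INR G).
  assert (HGp : 0 < INR G) by (apply lt_0_INR; auto).
  assert (HP : forall i, b i = true -> u i < P i < v i).
  { intros i Hb. unfold b in Hb. destruct (Rlt_dec d (v i - u i)) as [Hl|]; [|discriminate].
    pose proof (base_Int_part (INR G * u i)). unfold P, k. rewrite plus_IZR. simpl.
    split; apply Rmult_lt_reg_l with (INR G); auto; field_simplify; try lra.
    assert (INR G * (v i - u i) > INR G * d) by (apply Rmult_lt_compat_l; auto). nra. }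
  set (c i := Z.to_nat (k i mod Z.of_nat G)).
  assert (HGz : (0 < Z.of_nat G)%Z) by lia.
  assert (Hcnt : (length (filter b (seq 0 N)) <= G)%nat).
  { apply count_le with c.
    - intros i _. unfold c. pose proof (Z.mod_pos_bound (k i) _ HGz). lia.
    - intros i j Hi Hj Hc. unfold c in Hc.
      pose proof (Z.mod_pos_bound (k i) _ HGz). pose proof (Z.mod_pos_bound (k j) _ HGz).
      apply Z2Nat.inj in Hc; try lia.
      pose proof (Z.div_mod (k i) (Z.of_nat G) ltac:(lia)). pose proof (Z.div_mod (k j) (Z.of_nat G) ltac:(lia)).
      set (t := (k i / Z.of_nat G - k j / Z.of_nat G)%Z).
      assert (Ek : IZR (k i) = IZR (k j) + INR G * IZR t).
      { rewrite INR_IZR_INZ, <- mult_IZR, <- plus_IZR. f_equal. unfold t. lia. }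
      assert (EP : P i = P j + IZR t) by (unfold P; rewrite Ek; field; lra).
      specialize (HP i Hi) as Hpi. specialize (HP j Hj) as Hpj.
      assert (h0 (P i) = h0 x + INR i * th) by (apply Hlev; lra).
      assert (h0 (P j) = h0 x + INR j * th) by (apply Hlev; lra).
      rewrite EP, h0_shift in H3.
      apply (irr_int th th_irr i j t). lra. }
  assert (Hind : forall N, Rabs (BS N x - BS N a) <= INR N * w + 2 * C * INR (length (filter b (seq 0 N)))).
  { assert (Hw0 : 0 <= w).
    { pose proof (Hw 0 0). rewrite !Rminus_diag, Rabs_R0 in H. pose proof (Rabs_pos (g 0 - g 0)). lra. }
    intros M; induction M as [|M IH].
    - simpl. rewrite Rminus_0_r, Rabs_R0. simpl. lra.
    - cbn [bsum]. rewrite count_S, plus_INR, S_INR.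
      replace (BS M x + g (Nat.iter M f x) - (BS M a + g (Nat.iter M f a)))
        with ((BS M x - BS M a) + (g (v M) - g (u M))) by (unfold u, v; ring).
      eapply Rle_trans. apply Rabs_triang.
      unfold b at 2. destruct (Rlt_dec d (v M - u M)) as [Hl|Hn]; simpl.
      + assert (Rabs (g (v M) - g (u M)) <= 2 * C).
        { eapply Rle_trans. apply Rabs_triang. rewrite Rabs_Ropp.
          pose proof (HC (v M)). pose proof (HC (u M)). lra. }
        lra.
      + assert (Rabs (g (v M) - g (u M)) <= w).
        { apply Hw. specialize (Huv M). rewrite Rabs_right; lra. }
        lra. }
  eapply Rle_trans. apply Hind.
  assert (0 <= C) by (pose proof (HC 0); pose proof (Rabs_pos (g 0)); lra).
  apply le_INR in Hcnt. nra.
Qed.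


Theorem core_lower : forall eps, 0 < eps ->
  exists N, forall n, (N <= n)%nat -> forall x, - (INR n * eps) <= BS n x.
Proof.
  intros eps He. apply NNPP; intro Hn.
  assert (Hbad : forall N, exists n x, (N <= n)%nat /\ BS n x < - (INR n * eps)).
  { intro N. apply NNPP; intro H. apply Hn. exists N. intros n Hnn x.
    apply Rnot_lt_le. intro Hl. apply H. exists n, x. auto. }
  destruct (per_bound g g_cont g_per) as [C [HC1 HC]].
  assert (Hg0 : forall x, g (x + 1) = g x + 0) by (intros; rewrite g_per; ring).
  destruct (per_unif g 0 g_cont Hg0 (eps/4) ltac:(lra)) as [d1 [Hd1 Hu1]].
  destruct (nat_above (2 / d1 + 1)) as [G HG].
  assert (HGd : 1 < INR G * (d1 / 2)).
  { assert (2 / d1 * (d1 / 2) = 1) by (field; lra).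
    assert ((2 / d1 + 1) * (d1 / 2) <= INR G * (d1 / 2)) by (apply Rmult_le_compat_r; lra).
    nra. }
  assert (HG0 : (0 < G)%nat).
  { destruct G. simpl in HGd. lra. lia. }
  set (lam := eps / 4).
  assert (Hlam : 0 < lam) by (unfold lam; lra).
  assert (Hgood : forall M : nat, exists y, 0 <= y <= 1 /\ LS y /\
            forall j, (j <= M)%nat -> BS j y <= - (INR j * lam)).
  { intro M.
    destruct (nat_above (8 * C * INR G / eps + 4 * C * INR M / eps + 1)) as [N0 HN0].
    destruct (Hbad N0) as [n [x [Hn0 Hx]]].
    destruct (level_reduce x) as [a [Hax [Hha HLa]]].
    assert (Hw : forall u v, Rabs (u - v) <= d1 / 2 -> Rabs (g u - g v) <= eps / 4).
    { intros u v Huv. left. apply Hu1. lra. }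
    pose proof (distortion C (d1 / 2) (eps / 4) G x a HC ltac:(lra) Hw HG0 HGd Hax Hha n) as Hdist.
    apply le_INR in Hn0.
    assert (Hne : 8 * C * INR G + 4 * C * INR M + eps <= INR n * eps).
    { assert ((8 * C * INR G / eps + 4 * C * INR M / eps + 1) * eps
              = 8 * C * INR G + 4 * C * INR M + eps) by (field; lra).
      assert ((8 * C * INR G / eps + 4 * C * INR M / eps + 1) * eps <= INR n * eps)
        by (apply Rmult_le_compat_r; lra). lra. }
    assert (HGpos : 0 <= INR G) by apply pos_INR.
    assert (HMpos : 0 <= INR M) by apply pos_INR.
    assert (Hsa : BS n a < - (INR n * eps / 2)).
    { apply Rabs_def2b in Hdist. nra. }
    destruct (argmax_nat (fun k => BS k a + INR k * lam) n) as [m [Hmn Hmax]].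
    set (y0 := Nat.iter m f a).
    assert (Hy0 : forall j, (m + j <= n)%nat -> BS j y0 <= - (INR j * lam)).
    { intros j Hj. specialize (Hmax (m + j)%nat Hj). simpl in Hmax.
      rewrite bsum_add, plus_INR in Hmax. unfold y0. lra. }
    assert (Hm0 : - (INR m * lam) <= BS m a).
    { specialize (Hmax O ltac:(lia)). simpl in Hmax. lra. }
    assert (Hsplit : BS n a = BS m a + BS (n - m) y0).
    { unfold y0. rewrite <- bsum_add. f_equal. lia. }
    pose proof (bsum_bound C HC (n - m) y0) as Hb. apply Rabs_def2b in Hb.
    rewrite minus_INR in Hb by auto.
    assert (HmM : (M < n - m)%nat).
    { apply INR_lt. rewrite minus_INR by auto.
      assert (INR m <= INR n) by (apply le_INR; auto).
      assert (C * (INR n - INR m) > C * INR M).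
      { unfold lam in *. nra. }
      apply Rmult_lt_reg_l with C; lra. }
    set (y := y0 + IZR (- Int_part y0)).
    exists y. split; [|split].
    - pose proof (base_Int_part y0). unfold y. rewrite opp_IZR. lra.
    - apply LS_shift, LS_iter; auto.
    - intros j Hj. unfold y. rewrite bsum_shift by auto. apply Hy0. lia. }
  set (un := fun M => proj1_sig (constructive_indefinite_description _ (Hgood M))).
  assert (Hun : forall M, (0 <= un M <= 1) /\ LS (un M) /\
            forall j, (j <= M)%nat -> BS j (un M) <= - (INR j * lam)).
  { intro M. unfold un. destruct (constructive_indefinite_description _ (Hgood M)). simpl. auto. }
  destruct (Bolzano_Weierstrass un (fun t => 0 <= t <= 1) (compact_P3 0 1) (fun M => proj1 (Hun M)))
    as [l Hl].
  assert (HlS : forall j, BS j l <= - (INR j * lam)).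
  { intro j. apply Rnot_lt_le; intro Hlt.
    destruct (cont_eps (BS j) l (bsum_cont f g f_cont g_cont j l) (BS j l + INR j * lam) ltac:(lra))
      as [d [Hd Hdd]].
    destruct (Hl (fun z => Rabs (z - l) < d) j) as [p [Hp Hv]].
    { exists (mkposreal d Hd). intros z Hz. unfold disc in Hz. auto. }
    destruct (Hun p) as [_ [_ Hj]]. specialize (Hj j Hp). specialize (Hdd _ Hv).
    apply Rabs_def2 in Hdd. lra. }
  assert (Hmass : forall r, 0 < r -> h0 (l - r) < h0 (l + r)).
  { intros r Hr.
    destruct (Hl (fun z => Rabs (z - l) < r / 2) O) as [p [_ Hv]].
    { exists (mkposreal (r / 2) ltac:(lra)). intros z Hz. unfold disc in Hz. auto. }
    destruct (Hun p) as [_ [HL _]]. specialize (HL (r / 2) ltac:(lra)).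
    apply Rabs_def2 in Hv.
    pose proof (h0_mono (l - r) (un p - r / 2) ltac:(lra)).
    pose proof (h0_mono (un p) (l + r) ltac:(lra)). lra. }
  destruct (per_unif g 0 g_cont Hg0 (lam / 2) ltac:(lra)) as [d2 [Hd2 Hu2]].
  set (r := d2 / 4). set (u := l - r). set (v := l + r).
  assert (Hr : 0 < r) by (unfold r; lra).
  assert (Hcon : forall j, Nat.iter j f v - Nat.iter j f u <= 2 * r * exp (BS j l + INR j * (lam / 2))).
  { intro j; induction j as [|j IH].
    - simpl. rewrite Rmult_0_l, Rplus_0_r, exp_0. unfold u, v. lra.
    - assert (Hneg : BS j l + INR j * (lam / 2) <= 0).
      { specialize (HlS j). pose proof (pos_INR j). nra. }
      assert (Hex : exp (BS j l + INR j * (lam / 2)) <= 1).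
      { rewrite <- exp_0. apply exp_le_mono; auto. }
      assert (Huv : Nat.iter j f u < Nat.iter j f v) by (apply iter_mono; auto; unfold u, v; lra).
      assert (Hul : Nat.iter j f u <= Nat.iter j f l) by (apply iter_mono_le; auto; unfold u; lra).
      assert (Hlv : Nat.iter j f l <= Nat.iter j f v) by (apply iter_mono_le; auto; unfold v; lra).
      destruct (f_mvt _ _ Huv) as [c [Hc Hle]].
      assert (HD : Nat.iter j f v - Nat.iter j f u <= 2 * r) by nra.
      assert (Hgc : g c <= g (Nat.iter j f l) + lam / 2).
      { assert (Rabs (c - Nat.iter j f l) < d2).
        { apply Rabs_def1; unfold r in HD; lra. }
        specialize (Hu2 _ _ H). apply Rabs_def2 in Hu2. lra. }
      rewrite !Nat.iter_succ. cbn [bsum]. rewrite S_INR.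
      eapply Rle_trans. apply Hle.
      replace (BS j l + g (Nat.iter j f l) + (INR j + 1) * (lam / 2))
        with ((BS j l + INR j * (lam / 2)) + (g (Nat.iter j f l) + lam / 2)) by ring.
      rewrite exp_plus, <- Rmult_assoc.
      apply Rmult_le_compat; try lra. left; apply exp_pos. apply exp_le_mono; auto. }
  set (m0 := h0 v - h0 u).
  assert (Hm0 : 0 < m0) by (unfold m0, u, v; pose proof (Hmass r Hr); lra).
  destruct (per_unif h0 1 h0_cont h0_per m0 Hm0) as [d3 [Hd3 Hu3]].
  destruct (nat_above (4 * r / (lam * d3) + 1)) as [j Hj].
  assert (Hjl : 2 * r <= d3 * (INR j * (lam / 2)) - d3 * (lam / 2) * 0).
  { assert (4 * r / (lam * d3) * (d3 * (lam / 2)) = 2 * r) by (field; lra).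
    assert (4 * r / (lam * d3) * (d3 * (lam / 2)) <= INR j * (d3 * (lam / 2))).
    { apply Rmult_le_compat_r. nra. lra. }
    nra. }
  assert (Hjpos : INR j * (lam / 2) <> 0).
  { assert (1 <= INR j). { assert (0 <= 4 * r / (lam * d3)). { apply Rle_mult_inv_pos; nra. } lra. }
    nra. }
  pose proof (exp_ineq1 _ Hjpos) as Hexp.
  assert (HDj : Nat.iter j f v - Nat.iter j f u < d3).
  { eapply Rle_lt_trans. apply Hcon.
    assert (exp (BS j l + INR j * (lam / 2)) <= exp (- (INR j * (lam / 2)))).
    { apply exp_le_mono. specialize (HlS j). lra. }
    rewrite exp_Ropp in H.
    assert (2 * r * / exp (INR j * (lam / 2)) < d3).
    { pose proof (exp_pos (INR j * (lam / 2))).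
      apply Rmult_lt_reg_r with (exp (INR j * (lam / 2))); auto.
      rewrite Rmult_assoc, Rinv_l by lra. nra. }
    nra. }
  assert (Hpos : 0 < Nat.iter j f v - Nat.iter j f u) by (apply Rlt_Rminus, iter_mono; auto; unfold u, v; lra).
  specialize (Hu3 (Nat.iter j f v) (Nat.iter j f u)).
  rewrite !h0_iter in Hu3. rewrite Rabs_right in Hu3 by lra.
  assert (h0 v + INR j * th - (h0 u + INR j * th) = m0) by (unfold m0; ring).
  rewrite H in Hu3. rewrite Rabs_right in Hu3 by lra. lra.
Qed.

End Core.

Lemma eps_cont (p : R -> R) x :
  (forall eps, 0 < eps -> exists d, 0 < d /\ forall y, Rabs (y - x) < d -> Rabs (p y - p x) < eps) ->
  continuity_pt p x.
Proof.
  intros H eps He. destruct (H eps He) as [d [Hd Hdd]]. exists d. split; auto.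
  intros y [_ Hy]. apply Hdd. exact Hy.
Qed.

Lemma deg1_bound (p : R -> R) : (forall x y, x < y -> p x < p y) ->
  (forall x, p (x + 1) = p x + 1) -> forall x, p 0 + x - 1 < p x < p 0 + x + 1.
Proof.
  intros Hi Hp x. destruct (int_part_red x) as [k Hk].
  pose proof (shift_Z p 1 Hp k 0) as E0. rewrite Rplus_0_l in E0.
  pose proof (shift_Z p 1 Hp (k + 1) 0) as E1. rewrite Rplus_0_l, plus_IZR in E1. simpl in E1.
  split.
  - destruct (Req_dec x (IZR k)) as [e|ne]. rewrite e, E0. lra.
    assert (p (IZR k) < p x) by (apply Hi; lra). lra.
  - assert (p x < p (IZR k + 1)) by (apply Hi; lra). lra.
Qed.

Lemma inverse_exists (p : R -> R) : continuity p -> (forall x y, x < y -> p x < p y) ->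
  (forall x, p (x + 1) = p x + 1) ->
  {q : R -> R | (forall y, p (q y) = y) /\ (forall x, q (p x) = x)}.
Proof.
  intros Hc Hi Hp.
  assert (HB : forall y, bound (fun x => p x <= y)).
  { intros y. exists (y - p 0 + 1). intros x Hx. pose proof (deg1_bound p Hi Hp x). lra. }
  assert (HN : forall y, exists x, (fun x => p x <= y) x).
  { intros y. exists (y - p 0 - 1). pose proof (deg1_bound p Hi Hp (y - p 0 - 1)). simpl. lra. }
  set (q := fun y => proj1_sig (completeness _ (HB y) (HN y))).
  assert (Hpq : forall y, p (q y) = y).
  { intros y. unfold q. destruct (completeness _ (HB y) (HN y)) as [m [Hub Hlub]]. simpl.
    destruct (Rtotal_order (p m) y) as [Hlt|[Heq|Hgt]]; auto; exfalso.
    - destruct (cont_eps p m (Hc m) (y - p m) ltac:(lra)) as [d [Hd Hdd]].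
      assert (m + d / 2 <= m); [|lra]. apply Hub.
      specialize (Hdd (m + d / 2)). rewrite Rabs_right in Hdd by lra.
      assert (Rabs (p (m + d / 2) - p m) < y - p m) by (apply Hdd; lra).
      apply Rabs_def2 in H. lra.
    - destruct (cont_eps p m (Hc m) (p m - y) ltac:(lra)) as [d [Hd Hdd]].
      assert (m <= m - d / 2); [|lra]. apply Hlub. intros x Hx.
      apply Rnot_lt_le; intro Hl. assert (x <= m) by (apply Hub; auto).
      assert (Rabs (p x - p m) < p m - y) by (apply Hdd; apply Rabs_def1; lra).
      apply Rabs_def2 in H0. lra. }
  exists q. split; auto. intros x.
  destruct (Rtotal_order (q (p x)) x) as [Hlt|[Heq|Hgt]]; auto.
  - apply Hi in Hlt. rewrite Hpq in Hlt. lra.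
  - apply Hi in Hgt. rewrite Hpq in Hgt. lra.
Qed.

Lemma inv_props (p q : R -> R) : (forall x y, x < y -> p x < p y) ->
  (forall x, p (x + 1) = p x + 1) ->
  (forall y, p (q y) = y) -> (forall x, q (p x) = x) ->
  (forall x y, x < y -> q x < q y) /\ (forall y, q (y + 1) = q y + 1) /\ continuity q.
Proof.
  intros Hi Hp Hpq Hqp.
  assert (Hqi : forall x y, x < y -> q x < q y).
  { intros x y Hxy. destruct (Rlt_or_le (q x) (q y)) as [|Hle]; auto. exfalso.
    destruct Hle as [Hl|He]. apply Hi in Hl. rewrite !Hpq in Hl. lra.
    assert (p (q x) = p (q y)) by (rewrite He; auto). rewrite !Hpq in H. lra. }
  split; [auto|split].
  - intros y. rewrite <- (Hpq y) at 1. rewrite <- Hp, Hqp. reflexivity.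
  - intros y. apply eps_cont. intros eps He.
    set (x := q y).
    exists (Rmin (p (x + eps) - y) (y - p (x - eps))).
    assert (y = p x) by (unfold x; rewrite Hpq; auto).
    assert (p x < p (x + eps)) by (apply Hi; lra).
    assert (p (x - eps) < p x) by (apply Hi; lra).
    split. apply Rmin_pos; lra.
    intros z Hz. apply Rabs_def2 in Hz.
    pose proof (Rmin_l (p (x + eps) - y) (y - p (x - eps))).
    pose proof (Rmin_r (p (x + eps) - y) (y - p (x - eps))).
    assert (q z < q (p (x + eps))) by (apply Hqi; lra).
    assert (q (p (x - eps)) < q z) by (apply Hqi; lra).
    rewrite !Hqp in *. apply Rabs_def1; unfold x in *; lra.
Qed.

Lemma inv_deriv (p q : R -> R) y l :
  (forall x y, x < y -> p x < p y) ->
  (forall y, p (q y) = y) -> (forall x, q (p x) = x) -> continuity_pt q y ->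
  derivable_pt_lim p (q y) l -> 0 < l -> derivable_pt_lim q y (/ l).
Proof.
  intros Hi Hpq Hqp Hc Hder Hl eps He.
  set (eta := Rmin (l / 2) (eps * l * l / 4)).
  assert (Hell : 0 < eps * l * l) by (apply Rmult_lt_0_compat; [apply Rmult_lt_0_compat|]; lra).
  assert (Heta : 0 < eta) by (apply Rmin_pos; lra).
  destruct (Hder eta Heta) as [[d1 Hd1] Hdd1]. simpl in Hdd1.
  destruct (cont_eps q y Hc d1 Hd1) as [d [Hd Hdd]].
  exists (mkposreal d Hd). intros h Hh0 Hh. simpl in Hh.
  set (k := q (y + h) - q y).
  assert (Hk0 : k <> 0).
  { intro E. assert (q (y + h) = q y) by (unfold k in E; lra).
    assert (p (q (y + h)) = p (q y)) by (rewrite H; auto). rewrite !Hpq in H0. lra. }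
  assert (Hkd : Rabs k < d1) by (apply Hdd; replace (y + h - y) with h by ring; auto).
  specialize (Hdd1 k Hk0 Hkd).
  assert (Eh : p (q y + k) - p (q y) = h).
  { unfold k. replace (q y + (q (y + h) - q y)) with (q (y + h)) by ring. rewrite !Hpq. ring. }
  rewrite Eh in Hdd1.
  replace ((q (y + h) - q y) / h) with (k / h) by (unfold k; auto).
  set (t := h / k) in *.
  assert (Ht : Rabs (t - l) < eta) by exact Hdd1.
  pose proof (Rmin_l (l / 2) (eps * l * l / 4)). pose proof (Rmin_r (l / 2) (eps * l * l / 4)).
  apply Rabs_def2 in Ht.
  assert (Htp : l / 2 < t) by (unfold eta in *; lra).
  assert (E : k / h = / t) by (unfold t; field; split; auto).
  rewrite E.
  replace (/ t - / l) with ((l - t) / (t * l)) by (field; lra).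
  unfold Rdiv. rewrite Rabs_mult, Rabs_inv. rewrite (Rabs_right (t * l)) by nra.
  apply Rlt_le_trans with (eps * l * l / 4 / (t * l)).
  - unfold Rdiv at 2. apply Rmult_lt_compat_r. apply Rinv_0_lt_compat; nra. unfold eta in Ht; apply Rabs_def1; lra.
  - apply Rmult_le_reg_r with (t * l). nra. field_simplify; try lra. nra.
Qed.

Module Integ.
Import Coquelicot.Coquelicot.
Lemma antideriv_sig (e : R -> R) : continuity e ->
  {A : R -> R | (forall x, derivable_pt_lim A x (e x)) /\ A 0 = 0}.
Proof.
  intros He. exists (fun x => RInt e 0 x). split.
  - intros x. apply is_derive_Reals.
    apply (is_derive_RInt e (RInt e 0) 0 x).
    + apply filter_forall. intros b. apply (RInt_correct (V := R_CompleteNormedModule)).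
      apply (ex_RInt_continuous (V := R_CompleteNormedModule)).
      intros z _. apply continuity_pt_filterlim. apply He.
    + apply continuity_pt_filterlim. apply He.
  - apply (RInt_point (V := R_CompleteNormedModule)).
Qed.
End Integ.

Lemma deriv_inc (f f' : R -> R) : (forall x, derivable_pt_lim f x (f' x)) -> (forall x, 0 < f' x) ->
  forall x y, x < y -> f x < f y.
Proof.
  intros Hd Hp x y Hxy. destruct (MVT_cor2 f f' x y Hxy (fun c _ => Hd c)) as [c [Hc _]].
  pose proof (Hp c). nra.
Qed.

Lemma const_deriv0 (f : R -> R) : (forall x, derivable_pt_lim f x 0) -> forall x, f x = f 0.
Proof.
  intros Hd x. destruct (Rtotal_order 0 x) as [H|[H|H]].
  - destruct (MVT_cor2 f (fun _ => 0) 0 x H (fun c _ => Hd c)) as [c [Hc _]]. lra.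
  - subst; auto.
  - destruct (MVT_cor2 f (fun _ => 0) x 0 H (fun c _ => Hd c)) as [c [Hc _]]. lra.
Qed.

Lemma near_transl (G D : R -> R) e1 : (forall y, G (y + 1) = G y + 1) ->
  (forall y, derivable_pt_lim G y (D y)) -> (forall y, Rabs (D y - 1) <= e1) ->
  forall y, Rabs (G y - y - G 0) <= e1.
Proof.
  intros Hp Hd HD y.
  assert (He1 : 0 <= e1) by (pose proof (HD 0); pose proof (Rabs_pos (D 0 - 1)); lra).
  destruct (int_part_red y) as [k Hk].
  set (y' := y - IZR k).
  assert (E : G y - y = G y' - y').
  { pose proof (shift_Z (fun t => G t - t) 0 (fun t => ltac:(cbv beta; rewrite Hp; ring)) k y') as E.
    unfold y' in E |- *. replace (y - IZR k + IZR k) with y in E by ring. lra. }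
  rewrite E. destruct (Req_dec y' 0) as [Z0|NZ].
  - rewrite Z0. replace (G 0 - 0 - G 0) with 0 by ring. rewrite Rabs_R0; auto.
  - assert (Hy' : 0 < y') by (unfold y' in *; lra).
    destruct (MVT_cor2 G D 0 y' Hy' (fun c _ => Hd c)) as [c [Hc _]].
    replace (G y' - y' - G 0) with ((D c - 1) * y') by lra.
    rewrite Rabs_mult, (Rabs_right y') by lra. specialize (HD c).
    assert (y' < 1) by (unfold y' in *; lra). nra.
Qed.

Lemma iter_transl (G : R -> R) c e1 : (forall y, Rabs (G y - y - c) <= e1) ->
  forall j y, Rabs (Nat.iter j G y - y - INR j * c) <= INR j * e1.
Proof.
  intros H j; induction j as [|j IH]; intros y.
  - simpl. replace (y - y - 0 * c) with 0 by ring. rewrite Rabs_R0. lra.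
  - rewrite Nat.iter_succ, S_INR. specialize (IH y). specialize (H (Nat.iter j G y)).
    apply Rabs_def2b in IH. apply Rabs_def2b in H. apply Rabs_le. lra.
Qed.

Lemma rot_close (X : nat -> R) rho c e1 : Un_cv (fun j => X j / INR j) rho ->
  (forall j, Rabs (X j - INR j * c) <= INR j * e1 + 2) -> Rabs (rho - c) <= e1.
Proof.
  intros Hcv HX. apply Rnot_lt_le; intro Hlt.
  set (gam := Rabs (rho - c) - e1).
  assert (Hg : 0 < gam) by (unfold gam; lra).
  destruct (Hcv (gam / 2) ltac:(lra)) as [N HN].
  destruct (nat_above (4 / gam)) as [M HM].
  set (j := (Nat.max N M + 1)%nat).
  assert (HjN : (j >= N)%nat) by (unfold j; lia).
  assert (HjM : INR M + 1 <= INR j).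
  { unfold j. rewrite plus_INR. simpl. apply Rplus_le_compat_r, le_INR. lia. }
  assert (Hj1 : 1 <= INR j) by (pose proof (pos_INR M); lra).
  specialize (HN j HjN). unfold Rdist in HN.
  specialize (HX j).
  assert (H4 : 4 / gam * gam = 4) by (field; lra).
  assert (Hjg : 4 <= INR j * gam) by nra.
  assert (Hd : Rabs (X j / INR j - c) <= e1 + 2 / INR j).
  { replace (X j / INR j - c) with ((X j - INR j * c) / INR j) by (field; lra).
    unfold Rdiv. rewrite Rabs_mult, Rabs_inv, (Rabs_right (INR j)) by lra.
    apply Rmult_le_reg_r with (INR j). lra.
    rewrite Rmult_assoc, Rinv_l, Rmult_1_r by lra.
    assert (E2 : (e1 + 2 * / INR j) * INR j = INR j * e1 + 2) by (field; lra). rewrite E2. auto. }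
  assert (H2 : 2 / INR j <= gam / 2).
  { apply Rmult_le_reg_r with (INR j). lra. assert (2 / INR j * INR j = 2) by (field; lra). nra. }
  assert (Rabs (rho - c) <= Rabs (rho - X j / INR j) + Rabs (X j / INR j - c)).
  { replace (rho - c) with ((rho - X j / INR j) + (X j / INR j - c)) by ring. apply Rabs_triang. }
  rewrite (Rabs_minus_sym rho (X j / INR j)) in H. unfold gam in *. lra.
Qed.

Lemma per_ivt (phi : R -> R) z0 : continuity phi -> (forall x, phi (x + 1) = phi x) -> phi z0 <= 0 ->
  (forall z, phi z <= 0) \/ exists z, phi z = 0.
Proof.
  intros Hc Hp H0. destruct (classic (forall z, phi z <= 0)) as [|Hn]; [left; auto|right].
  apply not_all_ex_not in Hn. destruct Hn as [z1 Hz1]. apply Rnot_le_lt in Hz1.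
  destruct H0 as [H0|H0]; [|exists z0; auto].
  set (z1' := z1 + IZR (up (z0 - z1))).
  assert (Hz1' : phi z1' = phi z1).
  { unfold z1'. rewrite (shift_Z phi 0 (fun x => ltac:(rewrite Hp; ring))). ring. }
  assert (z0 < z1') by (unfold z1'; destruct (archimed (z0 - z1)); lra).
  destruct (IVT phi z0 z1' Hc H H0 ltac:(lra)) as [z [_ Hz]]. exists z; auto.
Qed.


Lemma Int_part_nonneg r : 0 <= r -> (0 <= Int_part r)%Z.
Proof.
  intros H. pose proof (base_Int_part r). apply le_IZR. destruct (Z_lt_le_dec (Int_part r) 0) as [Hl|]; [|apply IZR_le; auto].
  apply Z.lt_le_pred in Hl. apply IZR_le in Hl. rewrite <- Z.sub_1_r, minus_IZR in Hl. simpl in *. lra.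
Qed.

Lemma INR_to_nat (z : Z) : (0 <= z)%Z -> INR (Z.to_nat z) = IZR z.
Proof. intros H. rewrite INR_IZR_INZ, Z2Nat.id; auto. Qed.

Lemma dense_orbit th : irrational th -> forall a b, a < b ->
  exists (p : nat) (q : Z), a < INR p * th + IZR q < b.
Proof.
  intros Hirr a b Hab.
  destruct (nat_above (1 / (b - a) + 1)) as [K HK].
  assert (HKp : 1 <= INR K) by (assert (0 < 1 / (b - a)) by (apply Rdiv_lt_0_compat; lra); lra).
  assert (HKd : 1 < INR K * (b - a)).
  { assert (1 / (b - a) * (b - a) = 1) by (field; lra).
    assert ((1 / (b - a) + 1) * (b - a) <= INR K * (b - a)) by (apply Rmult_le_compat_r; lra). nra. }
  set (fr := fun p : nat => INR p * th - IZR (Int_part (INR p * th))).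
  assert (Hfr : forall p, 0 <= fr p < 1) by (intros; unfold fr; pose proof (base_Int_part (INR p * th)); lra).
  set (B := fun p => Z.to_nat (Int_part (INR K * fr p))).
  assert (HB0 : forall p, (0 <= Int_part (INR K * fr p))%Z).
  { intros p. apply Int_part_nonneg. specialize (Hfr p). nra. }
  assert (HBK : forall p, (B p < K)%nat).
  { intros p. unfold B. apply INR_lt. rewrite INR_to_nat by auto.
    pose proof (base_Int_part (INR K * fr p)). specialize (Hfr p). nra. }
  assert (Hdup : exists i j, (i < j)%nat /\ B i = B j).
  { apply NNPP; intro Hn.
    assert (Hnd : NoDup (map B (seq 0 (Datatypes.S K)))).
    { apply nodup_map_inj. apply seq_NoDup. intros i j _ _ Hij.
      destruct (Nat.lt_trichotomy i j) as [Hl|[He|Hg]]; auto; exfalso; apply Hn.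
      exists i, j; auto. exists j, i; auto. }
    apply (NoDup_incl_length (l' := seq 0 K)) in Hnd.
    rewrite length_map, !length_seq in Hnd. lia.
    intros z Hz. apply in_map_iff in Hz. destruct Hz as [i [<- _]]. apply in_seq. specialize (HBK i). lia. }
  destruct Hdup as [i [j [Hij HBij]]].
  assert (Hclose : Rabs (fr j - fr i) < 1 / INR K).
  { unfold B in HBij. apply Z2Nat.inj in HBij; auto.
    pose proof (base_Int_part (INR K * fr i)). pose proof (base_Int_part (INR K * fr j)).
    rewrite HBij in H. apply Rabs_def1.
    - apply Rmult_lt_reg_l with (INR K). lra. field_simplify; lra.
    - apply Rmult_lt_reg_l with (INR K). lra. field_simplify; lra. }
  set (d := (j - i)%nat).
  set (t := (Int_part (INR i * th) - Int_part (INR j * th))%Z).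
  set (del := fr j - fr i).
  assert (Edel : del = INR d * th + IZR t).
  { unfold del, fr, d, t. rewrite minus_INR by lia. rewrite minus_IZR. ring. }
  assert (Hdne : del <> 0).
  { intro E. assert (j = i); [|lia]. apply (irr_int th Hirr j i (- t)).
    rewrite Edel in E. unfold d in E. rewrite minus_INR in E by lia. rewrite opp_IZR. lra. }
  assert (Hdsmall : Rabs del < b - a).
  { eapply Rlt_trans. apply Hclose. apply Rmult_lt_reg_l with (INR K). lra. field_simplify; lra. }
  apply Rabs_def2 in Hdsmall.
  assert (Hgen : forall (m : nat) (q : Z), INR (m * d) * th + IZR (Z.of_nat m * t + q) = INR m * del + IZR q).
  { intros m q. rewrite Edel, mult_INR, plus_IZR, mult_IZR, <- INR_IZR_INZ. ring. }
  destruct (Rlt_or_le 0 del) as [Hpos|Hneg].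
  - set (q := Int_part a). set (c := a - IZR q).
    assert (Hc : 0 <= c < 1) by (unfold c, q; pose proof (base_Int_part a); lra).
    assert (Hc0 : 0 <= c / del) by (apply Rle_mult_inv_pos; lra).
    set (m := Z.to_nat (Int_part (c / del) + 1)).
    assert (Hm : INR m = IZR (Int_part (c / del)) + 1).
    { unfold m. rewrite INR_to_nat. rewrite plus_IZR; auto. pose proof (Int_part_nonneg _ Hc0). lia. }
    pose proof (base_Int_part (c / del)).
    exists (m * d)%nat, (Z.of_nat m * t + q)%Z. rewrite Hgen.
    assert (c < INR m * del /\ INR m * del <= c + del).
    { rewrite Hm. assert (Ec : c = c / del * del) by (field; lra). split; nra. }
    unfold c in *. lra.
  - assert (Hn : del < 0) by (destruct Hneg; auto; contradiction).
    set (q := (Int_part b + 1)%Z). set (c := IZR q - b).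
    assert (Hc : 0 < c <= 1) by (unfold c, q; rewrite plus_IZR; pose proof (base_Int_part b); simpl; lra).
    set (e := - del).
    assert (Hc0 : 0 <= c / e) by (apply Rle_mult_inv_pos; unfold e; lra).
    set (m := Z.to_nat (Int_part (c / e) + 1)).
    assert (Hm : INR m = IZR (Int_part (c / e)) + 1).
    { unfold m. rewrite INR_to_nat. rewrite plus_IZR; auto. pose proof (Int_part_nonneg _ Hc0). lia. }
    pose proof (base_Int_part (c / e)).
    exists (m * d)%nat, (Z.of_nat m * t + q)%Z. rewrite Hgen.
    assert (c < INR m * e /\ INR m * e <= c + e).
    { rewrite Hm. assert (Ec : c = c / e * e) by (field; unfold e; lra). assert (0 < e) by (unfold e; lra). split; nra. }
    unfold c, e in *. lra.
Qed.

Section Rot.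
Variables (F F' : R -> R) (rho : R).
Hypothesis HFd : forall x, derivable_pt_lim F x (F' x).
Hypothesis HF'c : continuity F'.
Hypothesis HF'p : forall x, 0 < F' x.
Hypothesis HFp : forall x, F (x + 1) = F x + 1.
Hypothesis Hrho : rotation_number F rho.
Hypothesis Hirr : irrational rho.

Notation Fi n x := (Nat.iter n F x).

Lemma F_cont : continuity F.
Proof. intro x. apply derivable_continuous_pt. exact (exist _ (F' x) (HFd x)). Qed.

Lemma F_inc : forall x y, x < y -> F x < F y.
Proof.
  intros x y Hxy. destruct (MVT_cor2 F F' x y Hxy (fun c _ => HFd c)) as [c [Hc _]].
  pose proof (HF'p c). nra.
Qed.

Lemma rot_le (d : nat) k z : (1 <= d)%nat -> (forall m, Fi (m * d) z - z <= INR m * k) ->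
  INR d * rho <= k.
Proof.
  intros Hd Hm. apply Rnot_lt_le; intro Hlt.
  assert (HD : 1 <= INR d) by (apply (le_INR 1); auto).
  set (eps := rho - k / INR d).
  assert (He : eps > 0).
  { unfold eps. assert (k / INR d < rho); [|lra].
    apply Rmult_lt_reg_r with (INR d). lra. field_simplify; lra. }
  destruct (Hrho z eps He) as [N HN].
  set (n := ((N + 1) * d)%nat).
  assert (Hn : (n >= N)%nat) by (unfold n; nia).
  specialize (HN n Hn). unfold Rdist in HN. apply Rabs_def2 in HN.
  specialize (Hm (N + 1)%nat).
  assert (HA : 1 <= INR (N + 1)) by (apply (le_INR 1); lia).
  assert (En : INR n = INR (N + 1) * INR d) by (unfold n; apply mult_INR).
  assert ((Fi n z - z) / INR n <= k / INR d).
  { rewrite En. apply Rmult_le_reg_r with (INR (N + 1) * INR d). nra.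
    field_simplify; try lra. unfold n in *. nra. }
  unfold eps in HN. lra.
Qed.

Lemma rot_ge (d : nat) k z : (1 <= d)%nat -> (forall m, INR m * k <= Fi (m * d) z - z) ->
  k <= INR d * rho.
Proof.
  intros Hd Hm. apply Rnot_lt_le; intro Hlt.
  assert (HD : 1 <= INR d) by (apply (le_INR 1); auto).
  set (eps := k / INR d - rho).
  assert (He : eps > 0).
  { unfold eps. assert (rho < k / INR d); [|lra].
    apply Rmult_lt_reg_r with (INR d). lra. field_simplify; lra. }
  destruct (Hrho z eps He) as [N HN].
  set (n := ((N + 1) * d)%nat).
  assert (Hn : (n >= N)%nat) by (unfold n; nia).
  specialize (HN n Hn). unfold Rdist in HN. apply Rabs_def2 in HN.
  specialize (Hm (N + 1)%nat).
  assert (HA : 1 <= INR (N + 1)) by (apply (le_INR 1); lia).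
  assert (En : INR n = INR (N + 1) * INR d) by (unfold n; apply mult_INR).
  assert (k / INR d <= (Fi n z - z) / INR n).
  { rewrite En. apply Rmult_le_reg_r with (INR (N + 1) * INR d). nra.
    field_simplify; try lra. unfold n in *. nra. }
  unfold eps in HN. lra.
Qed.

Lemma iter_mul_le (d : nat) k : (forall z, Fi d z - z <= k) -> forall m z, Fi (m * d) z - z <= INR m * k.
Proof.
  intros H m; induction m as [|m IH]; intros z. simpl. lra.
  change (Datatypes.S m * d)%nat with (d + m * d)%nat. rewrite Nat.iter_add, S_INR.
  specialize (H (Fi (m * d) z)). specialize (IH z). lra.
Qed.

Lemma iter_mul_ge (d : nat) k : (forall z, k <= Fi d z - z) -> forall m z, INR m * k <= Fi (m * d) z - z.
Proof.
  intros H m; induction m as [|m IH]; intros z. simpl. lra.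
  change (Datatypes.S m * d)%nat with (d + m * d)%nat. rewrite Nat.iter_add, S_INR.
  specialize (H (Fi (m * d) z)). specialize (IH z). lra.
Qed.

Lemma iter_mul_eq (d : nat) (k : Z) z : Fi d z = z + IZR k -> forall m, Fi (m * d) z - z = INR m * IZR k.
Proof.
  intros H m; induction m as [|m IH]. simpl. lra.
  change (Datatypes.S m * d)%nat with (d + m * d)%nat. rewrite Nat.iter_add, S_INR.
  assert (E : Fi (m * d) z = z + IZR (Z.of_nat m * k)).
  { rewrite mult_IZR, <- INR_IZR_INZ. lra. }
  rewrite E, iter_shift by auto. rewrite H, mult_IZR, <- INR_IZR_INZ. ring.
Qed.

Lemma Fi_cont n : continuity (fun x => Fi n x).
Proof. apply iter_cont, F_cont. Qed.

Lemma sign_pos (d : nat) (k : Z) : IZR k < INR d * rho -> forall z, IZR k < Fi d z - z.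
Proof.
  intros Hk z0. apply Rnot_le_lt; intro H0.
  destruct d as [|d']. { simpl in *. lra. }
  set (d := Datatypes.S d') in *.
  set (phi := fun z => Fi d z - z - IZR k).
  assert (Hc : continuity phi).
  { unfold phi. apply continuity_minus. apply continuity_minus. apply Fi_cont.
    apply derivable_continuous, derivable_id. apply continuity_const. intros ? ?; auto. }
  assert (Hp : forall x, phi (x + 1) = phi x) by (intros; unfold phi; rewrite iter_per1 by auto; ring).
  assert (Hd : (1 <= d)%nat) by (unfold d; lia).
  destruct (per_ivt phi z0 Hc Hp ltac:(unfold phi; lra)) as [Hall|[z Hz]].
  - assert (Hl : forall z, Fi d z - z <= IZR k) by (intros z; specialize (Hall z); unfold phi in Hall; lra).
    pose proof (rot_le d (IZR k) z0 Hd (fun m => iter_mul_le d (IZR k) Hl m z0)). lra.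
  - assert (Fi d z = z + IZR k) by (unfold phi in Hz; lra).
    pose proof (rot_le d (IZR k) z Hd (fun m => Req_le _ _ (iter_mul_eq d k z H m))). lra.
Qed.

Lemma sign_neg (d : nat) (k : Z) : INR d * rho < IZR k -> forall z, Fi d z - z < IZR k.
Proof.
  intros Hk z0. apply Rnot_le_lt; intro H0.
  destruct d as [|d']. { simpl in *. lra. }
  set (d := Datatypes.S d') in *.
  set (phi := fun z => IZR k - (Fi d z - z)).
  assert (Hc : continuity phi).
  { unfold phi. apply continuity_minus. apply continuity_const. intros ? ?; auto.
    apply continuity_minus. apply Fi_cont. apply derivable_continuous, derivable_id. }
  assert (Hp : forall x, phi (x + 1) = phi x) by (intros; unfold phi; rewrite iter_per1 by auto; ring).
  assert (Hd : (1 <= d)%nat) by (unfold d; lia).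
  destruct (per_ivt phi z0 Hc Hp ltac:(unfold phi; lra)) as [Hall|[z Hz]].
  - assert (Hl : forall z, IZR k <= Fi d z - z) by (intros z; specialize (Hall z); unfold phi in Hall; lra).
    pose proof (rot_ge d (IZR k) z0 Hd (fun m => iter_mul_ge d (IZR k) Hl m z0)). lra.
  - assert (Fi d z = z + IZR k) by (unfold phi in Hz; lra).
    pose proof (rot_ge d (IZR k) z Hd (fun m => Req_le _ _ (eq_sym (iter_mul_eq d k z H m)))). lra.
Qed.

Lemma ord (p p' : nat) (q q' : Z) : INR p * rho + IZR q < INR p' * rho + IZR q' ->
  Fi p 0 + IZR q < Fi p' 0 + IZR q'.
Proof.
  intros H. destruct (le_lt_dec p p') as [Hle|Hlt].
  - set (d := (p' - p)%nat). assert (Ep : p' = (d + p)%nat) by (unfold d; lia).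
    rewrite Ep, Nat.iter_add. rewrite Ep, plus_INR in H.
    pose proof (sign_pos d (q - q') ltac:(rewrite minus_IZR; lra) (Fi p 0)).
    rewrite minus_IZR in H0. lra.
  - set (d := (p - p')%nat). assert (Ep : p = (d + p')%nat) by (unfold d; lia).
    rewrite Ep, Nat.iter_add. rewrite Ep, plus_INR in H.
    pose proof (sign_neg d (q' - q) ltac:(rewrite minus_IZR; lra) (Fi p' 0)).
    rewrite minus_IZR in H0. lra.
Qed.

Lemma ord_rev (p p' : nat) (q q' : Z) : Fi p 0 + IZR q < Fi p' 0 + IZR q' ->
  INR p * rho + IZR q < INR p' * rho + IZR q'.
Proof.
  intros H. destruct (Rtotal_order (INR p * rho + IZR q) (INR p' * rho + IZR q')) as [|[He|Hg]]; auto.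
  - exfalso. assert (p = p').
    { apply (irr_int rho Hirr p p' (q' - q)). rewrite minus_IZR. lra. }
    subst. assert (IZR q = IZR q') by lra. rewrite H0 in H. lra.
  - apply ord in Hg. lra.
Qed.


Lemma F_le x y : x <= y -> F x <= F y.
Proof. intros [H|H]. left; apply F_inc; auto. subst; lra. Qed.

Definition Eset x v := exists (p : nat) (q : Z), v = INR p * rho + IZR q /\ Fi p 0 + IZR q <= x.

Lemma Eset_ub x v : Eset x v -> v <= x + 1.
Proof.
  intros [p [q [Ev Hle]]]. apply Rnot_lt_le; intro Hlt.
  set (k := (Int_part x + 1)%Z).
  assert (Hk : x < IZR k <= x + 1) by (unfold k; rewrite plus_IZR; pose proof (base_Int_part x); simpl; lra).
  assert (H : INR 0 * rho + IZR k < INR p * rho + IZR q) by (simpl; lra).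
  apply ord in H. simpl in H. lra.
Qed.

Lemma Eset_bound x : bound (Eset x).
Proof. exists (x + 1). intros v Hv. apply Eset_ub; auto. Qed.

Lemma Eset_ne x : exists v, Eset x v.
Proof.
  exists (IZR (Int_part x)). exists O, (Int_part x). simpl. split. ring.
  pose proof (base_Int_part x). lra.
Qed.

Definition h0 x := proj1_sig (completeness (Eset x) (Eset_bound x) (Eset_ne x)).

Lemma h0_lub x : is_lub (Eset x) (h0 x).
Proof. unfold h0. destruct (completeness (Eset x) (Eset_bound x) (Eset_ne x)). auto. Qed.

Lemma h0_ge x v : Eset x v -> v <= h0 x.
Proof. intros H. apply (proj1 (h0_lub x)); auto. Qed.

Lemma h0_le x B : (forall v, Eset x v -> v <= B) -> h0 x <= B.
Proof. intros H. apply (proj2 (h0_lub x)); auto. Qed.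

Lemma h0_mono x y : x <= y -> h0 x <= h0 y.
Proof.
  intros Hxy. apply h0_le. intros v [p [q [Ev Hle]]]. apply h0_ge. exists p, q. split; auto. lra.
Qed.

Lemma h0_per x : h0 (x + 1) = h0 x + 1.
Proof.
  apply Rle_antisym.
  - assert (h0 (x + 1) <= h0 x + 1); auto. apply h0_le. intros v [p [q [Ev Hle]]].
    assert (v - 1 <= h0 x); [|lra]. apply h0_ge. exists p, (q - 1)%Z. rewrite minus_IZR. split; simpl; lra.
  - assert (h0 x <= h0 (x + 1) - 1); [|lra]. apply h0_le. intros v [p [q [Ev Hle]]].
    assert (v + 1 <= h0 (x + 1)); [|lra]. apply h0_ge. exists p, (q + 1)%Z. rewrite plus_IZR. split; simpl; lra.
Qed.

Lemma Fi_S_shift p (q : Z) : Fi (Datatypes.S p) 0 + IZR q = F (Fi p 0 + IZR q).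
Proof. rewrite Nat.iter_succ. rewrite (shift_Z F 1 HFp q). ring. Qed.

Lemma h0_eq x : h0 (F x) = h0 x + rho.
Proof.
  apply Rle_antisym.
  - assert (h0 (F x) <= h0 x + rho); auto. apply h0_le. intros v Hv.
    apply Rnot_lt_le; intro Hlt. destruct Hv as [p [q [Ev Hle]]].
    destruct (dense_orbit rho Hirr (h0 x) (v - rho) ltac:(lra)) as [p' [q' Hw]].
    assert (H1 : INR (Datatypes.S p') * rho + IZR q' < INR p * rho + IZR q) by (rewrite S_INR; lra).
    apply ord in H1. rewrite Fi_S_shift in H1.
    assert (Fi p' 0 + IZR q' < x).
    { apply Rnot_le_lt; intro Hge. apply F_le in Hge. lra. }
    assert (INR p' * rho + IZR q' <= h0 x) by (apply h0_ge; exists p', q'; split; auto; lra). lra.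
  - assert (h0 x <= h0 (F x) - rho); [|lra]. apply h0_le. intros v [p [q [Ev Hle]]].
    assert (v + rho <= h0 (F x)); [|lra]. apply h0_ge. exists (Datatypes.S p), q.
    rewrite S_INR, Fi_S_shift. split. lra. apply F_le; auto.
Qed.

Lemma h0_cont : continuity h0.
Proof.
  intro x. apply eps_cont. intros eps He.
  destruct (dense_orbit rho Hirr (h0 x) (h0 x + eps) ltac:(lra)) as [p [q Hv]].
  set (z := Fi p 0 + IZR q).
  assert (Hz : x < z).
  { apply Rnot_le_lt; intro Hle. assert (INR p * rho + IZR q <= h0 x) by (apply h0_ge; exists p, q; split; auto). lra. }
  assert (Hr : forall y, y < z -> h0 y <= INR p * rho + IZR q).
  { intros y Hy. apply h0_le. intros w [p' [q' [Ew Hle]]].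
    assert (Fi p' 0 + IZR q' < Fi p 0 + IZR q) by (unfold z in Hy; lra).
    apply ord_rev in H. lra. }
  destruct (dense_orbit rho Hirr (h0 x - eps) (h0 x) ltac:(lra)) as [p1 [q1 Hv1]].
  assert (Hex : exists w, Eset x w /\ INR p1 * rho + IZR q1 < w).
  { apply NNPP; intro Hn. assert (h0 x <= INR p1 * rho + IZR q1); [|lra].
    apply h0_le. intros w Hw. apply Rnot_lt_le; intro. apply Hn; exists w; auto. }
  destruct Hex as [w [[p2 [q2 [Ew Hle2]]] Hw]].
  assert (Hz1 : Fi p1 0 + IZR q1 < Fi p2 0 + IZR q2) by (apply ord; lra).
  set (z1 := Fi p1 0 + IZR q1) in *.
  assert (Hl : forall y, z1 <= y -> INR p1 * rho + IZR q1 <= h0 y).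
  { intros y Hy. apply h0_ge. exists p1, q1. split; auto. }
  exists (Rmin (z - x) (x - z1)). split. apply Rmin_pos; lra.
  intros y Hy. apply Rabs_def2 in Hy.
  pose proof (Rmin_l (z - x) (x - z1)). pose proof (Rmin_r (z - x) (x - z1)).
  specialize (Hr y ltac:(lra)). specialize (Hl y ltac:(lra)). apply Rabs_def1; lra.
Qed.

Definition gF x := ln (F' x).

Lemma gF_cont : continuity gF.
Proof.
  intro x. unfold gF. apply (continuity_pt_comp F' ln). apply HF'c.
  apply derivable_continuous_pt. exact (exist _ _ (derivable_pt_lim_ln _ (HF'p x))).
Qed.

Lemma shift1_deriv x : derivable_pt_lim (fun y => y + 1) x 1.
Proof.
  intros eps He. exists (mkposreal eps He). intros h Hh _.
  replace ((x + h + 1 - (x + 1)) / h - 1) with 0 by (field; auto). rewrite Rabs_R0; auto.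
Qed.

Lemma F'_per x : F' (x + 1) = F' x.
Proof.
  assert (H1 : derivable_pt_lim (comp F (fun y => y + 1)) x (F' (x + 1) * 1)).
  { apply derivable_pt_lim_comp. apply shift1_deriv. apply HFd. }
  assert (E : comp F (fun y => y + 1) = fun y => F y + 1).
  { apply FunctionalExtensionality.functional_extensionality. intros y. unfold comp. apply HFp. }
  rewrite E in H1.
  assert (H2 : derivable_pt_lim (fun y => F y + 1) x (F' x)).
  { intros eps He. destruct (HFd x eps He) as [d Hd]. exists d. intros h Hh1 Hh2.
    replace ((F (x + h) + 1 - (F x + 1)) / h - F' x) with ((F (x + h) - F x) / h - F' x) by (field; auto).
    auto. }
  pose proof (uniqueness_limite _ _ _ _ H1 H2). lra.
Qed.

Lemma gF_per x : gF (x + 1) = gF x.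
Proof. unfold gF. rewrite F'_per. auto. Qed.

Lemma F_mvt : forall u v, u < v -> exists c, u <= c <= v /\ F v - F u <= (v - u) * exp (gF c).
Proof.
  intros u v Huv. destruct (MVT_cor2 F F' u v Huv (fun c _ => HFd c)) as [c [Hc Hcuv]].
  exists c. split. lra. unfold gF. rewrite exp_ln by auto. rewrite Hc. lra.
Qed.

Definition Finv := proj1_sig (inverse_exists F F_cont F_inc HFp).

Lemma F_Finv y : F (Finv y) = y.
Proof. unfold Finv. destruct (inverse_exists F F_cont F_inc HFp) as [q [H1 H2]]. apply H1. Qed.

Lemma Finv_F x : Finv (F x) = x.
Proof. unfold Finv. destruct (inverse_exists F F_cont F_inc HFp) as [q [H1 H2]]. apply H2. Qed.

Lemma Finv_props : (forall x y, x < y -> Finv x < Finv y) /\ (forall y, Finv (y + 1) = Finv y + 1) /\ continuity Finv.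
Proof. apply inv_props with F; auto. apply F_inc. apply F_Finv. apply Finv_F. Qed.

Definition g2 y := - gF (Finv y).

Lemma g2_cont : continuity g2.
Proof.
  intro y. unfold g2. apply continuity_pt_opp.
  apply (continuity_pt_comp Finv gF). apply (proj2 (proj2 Finv_props)). apply gF_cont.
Qed.

Lemma g2_per y : g2 (y + 1) = g2 y.
Proof. unfold g2. rewrite (proj1 (proj2 Finv_props)), gF_per. auto. Qed.

Lemma Finv_mvt : forall u v, u < v -> exists c, u <= c <= v /\ Finv v - Finv u <= (v - u) * exp (g2 c).
Proof.
  intros u v Huv. pose proof (proj1 Finv_props u v Huv) as Hl.
  destruct (MVT_cor2 F F' (Finv u) (Finv v) Hl (fun c _ => HFd c)) as [c [Hc Hcuv]].
  rewrite !F_Finv in Hc. exists (F c). split.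
  - split. rewrite <- (F_Finv u). left; apply F_inc; lra. rewrite <- (F_Finv v). left; apply F_inc; lra.
  - unfold g2, gF. rewrite Finv_F, exp_Ropp, exp_ln by auto. rewrite Hc.
    pose proof (HF'p c). right. field. lra.
Qed.

Lemma h0_Finv y : h0 (Finv y) = h0 y + - rho.
Proof. pose proof (h0_eq (Finv y)). rewrite F_Finv in H. lra. Qed.

Lemma irr_neg : irrational (- rho).
Proof.
  intros p q Hq E. apply (Hirr (- p)%Z q Hq). rewrite opp_IZR. unfold Rdiv in *. lra.
Qed.

Lemma bsum_inv_rel n y : bsum F gF n (Nat.iter n Finv y) = - bsum Finv g2 n y.
Proof.
  revert y. induction n as [|n IH]; intros y. simpl; ring.
  rewrite bsum_succ_l. rewrite Nat.iter_succ, F_Finv, IH. cbn [bsum]. unfold g2. ring.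
Qed.

Lemma iter_inv_F n x : Nat.iter n Finv (Nat.iter n F x) = x.
Proof.
  revert x. induction n as [|n IH]; intros x. reflexivity.
  rewrite Nat.iter_succ_r. change (Nat.iter (Datatypes.S n) F x) with (F (Nat.iter n F x)). rewrite Finv_F. auto.
Qed.

Lemma lyap : forall eps, 0 < eps -> exists N, forall n, (N <= n)%nat -> forall x,
  Rabs (bsum F gF n x) <= INR n * eps.
Proof.
  intros eps He.
  destruct (core_lower F Finv gF h0 rho F_cont gF_cont F_inc F_Finv HFp gF_per F_mvt
              h0_cont h0_mono h0_per h0_eq Hirr eps He) as [N1 H1].
  destruct (core_lower Finv F g2 h0 (- rho) (proj2 (proj2 Finv_props)) g2_cont (proj1 Finv_props)
              Finv_F (proj1 (proj2 Finv_props)) g2_per Finv_mvt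
              h0_cont h0_mono h0_per h0_Finv irr_neg eps He) as [N2 H2].
  exists (Nat.max N1 N2). intros n Hn x.
  specialize (H1 n ltac:(lia) x). specialize (H2 n ltac:(lia) (Nat.iter n F x)).
  pose proof (bsum_inv_rel n (Nat.iter n F x)) as E. rewrite iter_inv_F in E. apply Rabs_le; lra.
Qed.

Fixpoint ssum (m : nat) (x : R) : R :=
  match m with O => 0 | Datatypes.S m' => ssum m' x + bsum F gF m' x end.

Lemma ssum_F m x : ssum m (F x) + INR m * gF x = ssum m x + bsum F gF m x.
Proof.
  induction m as [|m IH]. simpl; ring.
  cbn [ssum]. rewrite S_INR. pose proof (bsum_succ_l F gF m x). lra.
Qed.

Lemma ssum_cont m : continuity (ssum m).
Proof.
  induction m as [|m IH]; cbn [ssum].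
  - apply continuity_const. intros ? ?; auto.
  - apply continuity_plus; auto. apply bsum_cont. apply F_cont. apply gF_cont.
Qed.

Lemma ssum_per m x : ssum m (x + 1) = ssum m x.
Proof.
  induction m as [|m IH]; cbn [ssum]; auto. rewrite IH.
  rewrite (bsum_shift F gF HFp gF_per m 1 x). auto.
Qed.

Definition ph m x := ssum m x / INR m.
Definition ee m x := exp (ph m x).

Lemma ee_cont m : continuity (ee m).
Proof.
  intro x. unfold ee. apply (continuity_pt_comp (ph m) exp).
  - unfold ph. apply continuity_pt_mult. apply ssum_cont. apply continuity_pt_const. intros ? ?; auto.
  - apply derivable_continuous_pt, derivable_exp.
Qed.

Lemma ee_pos m x : 0 < ee m x.
Proof. apply exp_pos. Qed.

Lemma ee_per m x : ee m (x + 1) = ee m x.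
Proof. unfold ee, ph. rewrite ssum_per. auto. Qed.

Definition AA m := proj1_sig (Integ.antideriv_sig (ee m) (ee_cont m)).

Lemma AA_deriv m x : derivable_pt_lim (AA m) x (ee m x).
Proof. unfold AA. destruct (Integ.antideriv_sig (ee m) (ee_cont m)) as [A [H1 H2]]. apply H1. Qed.

Lemma AA_0 m : AA m 0 = 0.
Proof. unfold AA. destruct (Integ.antideriv_sig (ee m) (ee_cont m)) as [A [H1 H2]]. apply H2. Qed.

Lemma AA_inc m : forall x y, x < y -> AA m x < AA m y.
Proof. apply deriv_inc with (ee m). apply AA_deriv. apply ee_pos. Qed.

Lemma AA_per m x : AA m (x + 1) = AA m x + AA m 1.
Proof.
  set (D := fun y => AA m (y + 1) - AA m y).
  assert (HD : forall y, derivable_pt_lim D y 0).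
  { intros y. replace 0 with (ee m (y + 1) * 1 - ee m y) by (rewrite ee_per; ring).
    apply derivable_pt_lim_minus.
    - apply (derivable_pt_lim_comp (fun y => y + 1) (AA m)). apply shift1_deriv. apply AA_deriv.
    - apply AA_deriv. }
  pose proof (const_deriv0 D HD x). unfold D in H. rewrite Rplus_0_l, AA_0 in H. lra.
Qed.

Definition ZZ m := AA m 1.

Lemma ZZ_pos m : 0 < ZZ m.
Proof. unfold ZZ. rewrite <- (AA_0 m). apply AA_inc. lra. Qed.

Definition HH m x := / ZZ m * AA m x.

Lemma HH_deriv m x : derivable_pt_lim (HH m) x (/ ZZ m * ee m x).
Proof. apply (derivable_pt_lim_scal (AA m)). apply AA_deriv. Qed.

Lemma HH_dpos m x : 0 < / ZZ m * ee m x.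
Proof. pose proof (ZZ_pos m). pose proof (ee_pos m x). apply Rmult_lt_0_compat; auto. apply Rinv_0_lt_compat; auto. Qed.

Lemma HH_inc m : forall x y, x < y -> HH m x < HH m y.
Proof. apply deriv_inc with (fun x => / ZZ m * ee m x). apply HH_deriv. apply HH_dpos. Qed.

Lemma HH_per m x : HH m (x + 1) = HH m x + 1.
Proof. unfold HH. rewrite AA_per. pose proof (ZZ_pos m). unfold ZZ in *. field. lra. Qed.

Lemma HH_cont m : continuity (HH m).
Proof. intro x. apply derivable_continuous_pt. exact (exist _ _ (HH_deriv m x)). Qed.

Lemma HH_0 m : HH m 0 = 0.
Proof. unfold HH. rewrite AA_0. ring. Qed.

Lemma HH_diffeo m : circle_diffeo (HH m).
Proof.
  exists (fun x => / ZZ m * ee m x). split; [|split; [|split]].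
  - apply HH_deriv.
  - apply (continuity_scal (ee m)). apply ee_cont.
  - apply HH_dpos.
  - apply HH_per.
Qed.

Definition HHinv m := proj1_sig (inverse_exists (HH m) (HH_cont m) (HH_inc m) (HH_per m)).

Lemma HH_HHinv m y : HH m (HHinv m y) = y.
Proof. unfold HHinv. destruct (inverse_exists (HH m) (HH_cont m) (HH_inc m) (HH_per m)) as [q [H1 H2]]. apply H1. Qed.

Lemma HHinv_HH m x : HHinv m (HH m x) = x.
Proof. unfold HHinv. destruct (inverse_exists (HH m) (HH_cont m) (HH_inc m) (HH_per m)) as [q [H1 H2]]. apply H2. Qed.

Lemma HHinv_props m : (forall x y, x < y -> HHinv m x < HHinv m y) /\
  (forall y, HHinv m (y + 1) = HHinv m y + 1) /\ continuity (HHinv m).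
Proof. apply inv_props with (HH m). apply HH_inc. apply HH_per. apply HH_HHinv. apply HHinv_HH. Qed.

Definition Gf m y := HH m (F (HHinv m y)).

Definition Gd m y := (/ ZZ m * ee m (F (HHinv m y))) * (F' (HHinv m y) * / (/ ZZ m * ee m (HHinv m y))).

Lemma Gd_deriv m y : derivable_pt_lim (fun y => HH m (F (HHinv m y))) y (Gd m y).
Proof.
  assert (Hi : derivable_pt_lim (HHinv m) y (/ (/ ZZ m * ee m (HHinv m y)))).
  { apply inv_deriv with (HH m). apply HH_inc. apply HH_HHinv. apply HHinv_HH.
    apply (proj2 (proj2 (HHinv_props m))). apply HH_deriv. apply HH_dpos. }
  apply (derivable_pt_lim_comp (comp F (HHinv m)) (HH m)).
  - apply derivable_pt_lim_comp. apply Hi. apply HFd.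
  - apply HH_deriv.
Qed.

Lemma Gd_val m y : (1 <= m)%nat -> Gd m y = exp (bsum F gF m (HHinv m y) / INR m).
Proof.
  intros Hm. set (z := HHinv m y). unfold Gd. fold z.
  pose proof (ZZ_pos m). pose proof (ee_pos m z). pose proof (HF'p z).
  assert (HmR : 1 <= INR m) by (apply (le_INR 1); auto).
  replace (bsum F gF m z / INR m) with (ph m (F z) + gF z - ph m z).
  - unfold ee, gF. unfold Rminus. rewrite !exp_plus, exp_Ropp, exp_ln by auto.
    field. split. pose proof (exp_pos (ph m z)). lra. lra.
  - unfold ph. pose proof (ssum_F m z). field_simplify_eq; [|lra]. lra.
Qed.

Lemma Gf_per m y : Gf m (y + 1) = Gf m y + 1.
Proof. unfold Gf. rewrite (proj1 (proj2 (HHinv_props m))), HFp, HH_per. auto. Qed.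

Lemma Gf_iter m j y : Nat.iter j (Gf m) y = HH m (Nat.iter j F (HHinv m y)).
Proof.
  induction j as [|j IH]. simpl. rewrite HH_HHinv; auto.
  rewrite !Nat.iter_succ, IH. unfold Gf. rewrite HHinv_HH. auto.
Qed.

Lemma HH_near m u : Rabs (HH m u - u) < 1.
Proof.
  pose proof (deg1_bound (HH m) (HH_inc m) (HH_per m) u). rewrite HH_0 in H. apply Rabs_def1; lra.
Qed.

Lemma final_main :
  exists (H Hinv : nat -> R -> R) (G' : nat -> R -> R),
    (forall n, circle_diffeo (H n)) /\
    (forall n x, H n (Hinv n x) = x /\ Hinv n (H n x) = x) /\
    (forall n x, derivable_pt_lim (fun y => H n (F (Hinv n y))) x (G' n x)) /\
    (forall eps, 0 < eps -> exists N : nat, forall n, (N <= n)%nat ->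
       exists k : Z, forall x,
         Rabs (H n (F (Hinv n x)) - (x + rho) - IZR k) <= eps /\
         Rabs (G' n x - 1) <= eps).
Proof.
  exists (fun n => HH (Datatypes.S n)), (fun n => HHinv (Datatypes.S n)), (fun n => Gd (Datatypes.S n)).
  split; [|split; [|split]].
  - intro n; apply HH_diffeo.
  - intros n x; split; [apply HH_HHinv | apply HHinv_HH].
  - intros n x. apply Gd_deriv.
  - intros eps He.
    set (e1 := eps / 2).
    destruct (cont_eps exp 0 (derivable_continuous_pt _ _ (derivable_exp 0)) e1 ltac:(unfold e1; lra))
      as [d [Hd Hdd]].
    destruct (lyap (d / 2) ltac:(lra)) as [N HN].
    exists N. intros n Hn. exists 0%Z.
    set (m := Datatypes.S n).
    assert (HmR : 1 <= INR m) by (apply (le_INR 1); unfold m; lia).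
    assert (HGd : forall y, Rabs (Gd m y - 1) <= e1).
    { intro y. rewrite Gd_val by (unfold m; lia). rewrite <- exp_0. left. apply Hdd.
      specialize (HN m ltac:(unfold m; lia) (HHinv m y)).
      rewrite Rminus_0_r. unfold Rdiv. rewrite Rabs_mult, Rabs_inv, (Rabs_right (INR m)) by lra.
      apply Rle_lt_trans with (INR m * (d / 2) * / INR m).
      + apply Rmult_le_compat_r; auto. left; apply Rinv_0_lt_compat; lra.
      + replace (INR m * (d / 2) * / INR m) with (d / 2) by (field; lra). lra. }
    assert (Hnt := near_transl (Gf m) (Gd m) e1 (Gf_per m) (fun y => Gd_deriv m y) HGd).
    set (c := Gf m 0) in *.
    assert (Hrc : Rabs (rho - c) <= e1).
    { set (w := HHinv m 0).
      apply (rot_close (fun j => Nat.iter j F w - w) rho c e1 (Hrho w)).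
      intro j. pose proof (iter_transl (Gf m) c e1 Hnt j 0) as H1. rewrite Gf_iter in H1. fold w in H1.
      pose proof (HH_near m (Nat.iter j F w)) as H2. pose proof (HH_near m w) as H3.
      assert (Hw : HH m w = 0) by (unfold w; apply HH_HHinv).
      rewrite Hw in H3.
      apply Rabs_def2b in H1. apply Rabs_def2 in H2. apply Rabs_def2 in H3.
      apply Rabs_le. lra. }
    intro x. split.
    + specialize (Hnt x). fold (Gf m x). apply Rabs_def2b in Hnt. apply Rabs_def2b in Hrc.
      simpl IZR. apply Rabs_le. unfold e1 in *. lra.
    + specialize (HGd x). unfold e1 in *. lra.
Qed.

End Rot.

Theorem mainTheorem3 (F : R -> R) (rho : R)
  (hF : circle_diffeo F) (hrho : rotation_number F rho) (hirr : irrational rho) :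
  exists (H Hinv : nat -> R -> R) (G' : nat -> R -> R),
    (forall n, circle_diffeo (H n)) /\
    (forall n x, H n (Hinv n x) = x /\ Hinv n (H n x) = x) /\
    (forall n x, derivable_pt_lim (fun y => H n (F (Hinv n y))) x (G' n x)) /\
    (forall eps, 0 < eps -> exists N : nat, forall n, (N <= n)%nat ->
       exists k : Z, forall x,
         Rabs (H n (F (Hinv n x)) - (x + rho) - IZR k) <= eps /\
         Rabs (G' n x - 1) <= eps).
Proof.
  destruct hF as [F' [HFd [HF'c [HF'p HFp]]]].
  eapply final_main; eauto.
Qed.
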